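(* Let $g(x)\in\mathbb{Z}[x]$ and let $\{R_i\}_{i\in I}$ be a family of rings. Then $\prod_{i\in I}R_i$ is weakly $g(x)$-$r$-clean if and only if every $R_i$ is weakly $g(x)$-$r$-clean and at most one $R_i$ is not $g(x)$-$r$-clean.
   Context: Rings are associative with identity; an integer polynomial $g(x)$ is evaluated in any ring via the canonical map $\mathbb{Z}\to R$. $Reg(R)=\{r\in R: r=ryr \text{ for some } y\in R\}$. A ring $R$ is $g(x)$-$r$-clean if every $x\in R$ can be written $x=r+s$ with $r\in Reg(R)$ and $g(s)=0$. An element $x\in R$ is weakly $g(x)$-$r$-clean if $x=r+s$ or $x=r-s$ with $r\in Reg(R)$ and $g(s)=0$; $R$ is weakly $g(x)$-$r$-clean if all its elements are. *)

(* Defs.v *)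
From HB Require Import structures.
From mathcomp Require Import all_boot all_order all_algebra.
Set Implicit Arguments. Unset Strict Implicit. Unset Printing Implicit Defensive.
Import GRing.Theory.
Local Open Scope ring_scope.

(* Rings: associative with identity (possibly the zero ring), not necessarily
   commutative: MathComp's pzRingType. *)

Definition gev (R : pzRingType) (g : {poly int}) (s : R) : R :=
  \sum_(k < size g) (g`_k)%:~R * s ^+ k.

Definition regular (R : pzRingType) (r : R) : Prop := exists y : R, r = r * y * r.

Definition gr_clean (g : {poly int}) (R : pzRingType) : Prop :=
  forall x : R, exists r s : R, regular r /\ gev g s = 0 /\ x = r + s.

Definition weakly_gr_clean_elt (g : {poly int}) (R : pzRingType) (x : R) : Prop :=
  exists r s : R, regular r /\ gev g s = 0 /\ (x = r + s \/ x = r - s).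

Definition weakly_gr_clean (g : {poly int}) (R : pzRingType) : Prop :=
  forall x : R, weakly_gr_clean_elt g x.

(* The direct product prod_{i in I} R_i, for an arbitrary index type I,
   with its componentwise ring operations written out explicitly.
   Its elements are dependent functions x : forall i, R i; sums, differences
   and products are computed componentwise, and since the canonical map
   Z -> prod R_i is componentwise, g(s) = 0 in the product iff g(s i) = 0
   in every R_i. *)
Section Product.
Variables (I : Type) (R : I -> pzRingType).

Definition prod_regular (r : forall i, R i) : Prop :=
  exists y : forall i, R i, forall i, r i = r i * y i * r i.

Definition prod_groot (g : {poly int}) (s : forall i, R i) : Prop :=
  forall i, gev g (s i) = 0.

Definition prod_weakly_gr_clean_elt (g : {poly int}) (x : forall i, R i) : Prop :=
  exists r s : forall i, R i, prod_regular r /\ prod_groot g s /\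
    ((forall i, x i = r i + s i) \/ (forall i, x i = r i - s i)).

Definition prod_weakly_gr_clean (g : {poly int}) : Prop :=
  forall x : forall i, R i, prod_weakly_gr_clean_elt g x.
End Product.

(* Main.v *)
Require Import Defs.
From mathcomp Require Import all_boot all_order all_algebra.
From Stdlib Require Import Classical ClassicalEpsilon.
Import GRing.Theory.
Local Open Scope ring_scope.

Lemma regN (T : pzRingType) (r : T) : regular r -> regular (- r).
Proof. by case=> y Hy; exists (- y); rewrite mulrNN mulrN -Hy. Qed.

Lemma dchoice (I : Type) (A : I -> Type) (Q : forall j, A j -> Prop) :
  (forall j, exists p : A j, Q j p) -> exists f : forall j, A j, forall j, Q j (f j).
Proof.
move=> H; exists (fun j => proj1_sig (constructive_indefinite_description _ (H j))).
by move=> j; case: (constructive_indefinite_description _ (H j)).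
Qed.

Arguments dchoice {I A}.

Definition cast (I : Type) (R : I -> pzRingType) (i j : I) (xi : R i) : R j :=
  match excluded_middle_informative (i = j) with
  | left e => eq_rect i R xi j e | right _ => 0 end.

Arguments cast {I R}.

Lemma castE (I : Type) (R : I -> pzRingType) (i : I) (xi : R i) : cast i i xi = xi.
Proof.
rewrite /cast; case: excluded_middle_informative => [e|//].
by rewrite (proof_irrelevance _ e erefl).
Qed.

Lemma castN (I : Type) (R : I -> pzRingType) (i j : I) (xi : R i) : i <> j -> cast i j xi = 0.
Proof. by rewrite /cast; case: excluded_middle_informative. Qed.

Theorem theorem3p3 (g : {poly int}) (I : Type) (R : I -> pzRingType) :
  prod_weakly_gr_clean R g <->
  ((forall i, weakly_gr_clean g (R i)) /\
   (forall i j, ~ gr_clean g (R i) -> ~ gr_clean g (R j) -> i = j)).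
Proof.
split.
- move=> H; split.
  + move=> i xi.
    have [r [s [[y Hy] [Hs Hx]]]] := H (fun j => cast i j xi).
    exists (r i), (s i); split; first by exists (y i).
    split; first exact: Hs.
    by case: Hx => Hx; [left|right]; rewrite -Hx castE.
  + move=> i j Hi Hj; apply: NNPP => nij.
    have [xi Hxi] : exists xi : R i, forall r s, regular r -> gev g s = 0 -> xi <> r + s.
      apply: NNPP => C; apply: Hi => xi; apply: NNPP => C2; apply: C; exists xi.
      by move=> r s Hr Hs E; apply: C2; exists r, s.
    have [xj Hxj] : exists xj : R j, forall r s, regular r -> gev g s = 0 -> xj <> r + s.
      apply: NNPP => C; apply: Hj => xj; apply: NNPP => C2; apply: C; exists xj.
      by move=> r s Hr Hs E; apply: C2; exists r, s.
    have [r [s [[y Hy] [Hs Hx]]]] := H (fun k => cast i k xi + cast j k (- xj)).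
    case: Hx => Hx.
    * apply: (Hxi (r i) (s i)); [by exists (y i) | exact: Hs |].
      by rewrite -Hx castE castN ?addr0 // => e; apply: nij.
    * have Hrj : regular (- r j) by apply: regN; exists (y j).
      apply: (Hxj _ _ Hrj (Hs j)).
      have := Hx j; rewrite castE castN ?add0r; last by move=> e; apply: nij.
      by move=> E; rewrite -[xj]opprK E opprB addrC.
- case=> Hw Hu x.
  have [Hall | Hn] := classic (forall j, gr_clean g (R j)).
  + have [f Hf] := dchoice (fun j (p : (R j * R j)%type) =>
        regular p.1 /\ gev g p.2 = 0 /\ x j = p.1 + p.2)
      (fun j => let: ex_intro r (ex_intro s H) := Hall j (x j) in ex_intro _ (r, s) H).
    exists (fun j => (f j).1), (fun j => (f j).2).
    have [y Hy] := dchoice (fun j (y : R j) => (f j).1 = (f j).1 * y * (f j).1)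
      (fun j => proj1 (Hf j)).
    split; first by exists y.
    split; first by move=> j; case: (Hf j) => _ [].
    by left => j; case: (Hf j) => _ [].
  + have [i0 Hi0] : exists i0, ~ gr_clean g (R i0).
      by apply: NNPP => C; apply: Hn => j; apply: NNPP => C2; apply: C; exists j.
    have Hcl : forall j, j <> i0 -> gr_clean g (R j).
      by move=> j nj; apply: NNPP => C; apply: nj; apply: Hu.
    have [r0 [s0 [Hr0 [Hs0 Hx0]]]] := Hw i0 (x i0).
    case: Hx0 => Hx0.
    * have /dchoice [f Hf] : forall j, exists p : (R j * R j)%type,
          regular p.1 /\ gev g p.2 = 0 /\ x j = p.1 + p.2.
        move=> j; have [->|nj] := classic (j = i0); first by exists (r0, s0).
        by have [r [s Hrs]] := Hcl j nj (x j); exists (r, s).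
      exists (fun j => (f j).1), (fun j => (f j).2).
      have [y Hy] := dchoice (fun j (y : R j) => (f j).1 = (f j).1 * y * (f j).1)
        (fun j => proj1 (Hf j)).
      split; first by exists y.
      split; first by move=> j; case: (Hf j) => _ [].
      by left => j; case: (Hf j) => _ [].
    * have /dchoice [f Hf] : forall j, exists p : (R j * R j)%type,
          regular p.1 /\ gev g p.2 = 0 /\ x j = p.1 - p.2.
        move=> j; have [->|nj] := classic (j = i0); first by exists (r0, s0).
        have [r [s [Hr [Hs E]]]] := Hcl j nj (- x j); exists (- r, s).
        split; first exact: regN.
        by split=> //=; rewrite -[x j]opprK E opprD.
      exists (fun j => (f j).1), (fun j => (f j).2).
      have [y Hy] := dchoice (fun j (y : R j) => (f j).1 = (f j).1 * y * (f j).1)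
        (fun j => proj1 (Hf j)).
      split; first by exists y.
      split; first by move=> j; case: (Hf j) => _ [].
      by right => j; case: (Hf j) => _ [].
Qed.
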